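(* Let $G=(V,E)$ be a finite graph satisfying the $CD\psi(n,-K)$ condition for some $n>0$, $K>0$, where $\psi:(0,+\infty)\to\mathbb R$ is a $C^1$ concave function. Let $u$ be a positive solution of the heat equation $\partial_t u=\Delta u$ on $V$ and fix $0<\alpha<1$. Then for all vertices and all $t>0$, $$(1-\alpha)\Gamma^{\psi}(u)-\psi'(1)\frac{\partial_{t}u}{u}\leq \frac{n}{2(1-\alpha)t}+\frac{Kn}{\alpha}.$$
   Context: Graphs: $G=(V,E)$ is a connected, locally finite graph; each edge $xy$ carries a weight $w_{xy}>0$ (possibly asymmetric), and $\mu:V\to(0,\infty)$ is a vertex measure; $y\sim x$ means $xy\in E$. Laplacian: $\Delta f(x)=\frac{1}{\mu(x)}\sum_{y\sim x}w_{xy}(f(y)-f(x))$. For $\psi:(0,\infty)\to\mathbb R$ and $f:V\to(0,\infty)$: the $\psi$-Laplacian is $\Delta^\psi f(x)=\Delta\big[\psi\big(\tfrac{f}{f(x)}\big)\big](x)$ (the Laplacian at $x$ of the function $y\mapsto\psi(f(y)/f(x))$); for $C^1$ $\psi$, $\overline\psi(s)=\psi'(1)(s-1)-(\psi(s)-\psi(1))$ and the $\psi$-gradient is $\Gamma^\psi f=\Delta^{\overline\psi}f$; $(\Omega^\psi f)(x)=\Delta\big[\psi'\big(\tfrac{f}{f(x)}\big)\tfrac{f}{f(x)}\big(\tfrac{\Delta f}{f}-\tfrac{\Delta f(x)}{f(x)}\big)\big](x)$; and the second $\psi$-gradient is given by $2\Gamma_2^\psi(f)=\Omega^\psi f+\frac{\Delta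 f\,\Delta^\psi f}{f}-\frac{\Delta(f\Delta^\psi f)}{f}$. The graph satisfies $CD\psi(n,K)$ if for every $f:V\to(0,\infty)$ and every vertex, $\Gamma_2^\psi(f)\ge\frac1n(\Delta^\psi f)^2+K\Gamma^\psi(f)$. A positive solution of the heat equation on $U\subset V$ is $u:V\times[0,\infty)\to(0,\infty)$, continuously differentiable in $t$, with $\partial_t u=\Delta u$ at every $x\in U$, $t\ge0$; operators are applied to $u(\cdot,t)$ at each fixed time. *)

(* Defs.v *)
From HB Require Import structures.
From mathcomp Require Import all_boot all_order all_algebra.
From mathcomp Require Import all_classical all_reals all_analysis.
Set Implicit Arguments. Unset Strict Implicit. Unset Printing Implicit Defensive.
Import Order.TTheory GRing.Theory Num.Theory.
Import numFieldNormedType.Exports.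
Local Open Scope ring_scope.
Local Open Scope classical_set_scope.

Section GraphOps.
Variables (R : realType) (V : finType).
Variables (adj : rel V) (w : V -> V -> R) (mu : V -> R).

Definition Lap (f : V -> R) (x : V) : R :=
  (mu x)^-1 * \sum_(y | adj x y) w x y * (f y - f x).

Definition psiLap (psi : R -> R) (f : V -> R) (x : V) : R :=
  Lap (fun y => psi (f y / f x)) x.

Definition psibar (psi : R -> R) : R -> R :=
  fun s => derive1 psi 1 * (s - 1) - (psi s - psi 1).

Definition psiGamma (psi : R -> R) (f : V -> R) (x : V) : R :=
  psiLap (psibar psi) f x.

Definition psiOmega (psi : R -> R) (f : V -> R) (x : V) : R :=
  Lap (fun y => derive1 psi (f y / f x) * (f y / f x) *
                (Lap f y / f y - Lap f x / f x)) x.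

Definition psiGamma2 (psi : R -> R) (f : V -> R) (x : V) : R :=
  (psiOmega psi f x + Lap f x * psiLap psi f x / f x
   - Lap (fun y => f y * psiLap psi f y) x / f x) / 2.

Definition CDpsi (psi : R -> R) (n K : R) : Prop :=
  forall f : V -> R, (forall y, 0 < f y) ->
  forall x, psiGamma2 psi f x >= n^-1 * (psiLap psi f x) ^+ 2 + K * psiGamma psi f x.

End GraphOps.

(* Weighted graph data: symmetric edge relation (undirected graph),
   connected, positive (possibly asymmetric) weights on edges, positive measure. *)
Definition weighted_graph (R : realType) (V : finType)
  (adj : rel V) (w : V -> V -> R) (mu : V -> R) : Prop :=
  [/\ symmetric adj,
      (forall x y : V, connect adj x y),
      (forall x y, adj x y -> 0 < w x y) &
      (forall x, 0 < mu x)].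

Definition C1_pos (R : realType) (psi : R -> R) : Prop :=
  (forall s : R, 0 < s -> derivable psi s 1) /\
  (forall s : R, 0 < s -> {for s, continuous (derive1 psi)}).

Definition concave_pos (R : realType) (psi : R -> R) : Prop :=
  forall (s1 s2 l : R), 0 < s1 -> 0 < s2 -> 0 <= l <= 1 ->
    l * psi s1 + (1 - l) * psi s2 <= psi (l * s1 + (1 - l) * s2).

(* u : V -> [0,+oo) -> (0,+oo) positive solution of the heat equation on all of V:
   positive for t >= 0, differentiable in t on [0,+oo) (right derivative at 0),
   with d/dt u = Delta u.  (Values of u at t < 0 are irrelevant junk.) *)
Definition heat_solution (R : realType) (V : finType)
  (adj : rel V) (w : V -> V -> R) (mu : V -> R) (u : V -> R -> R) : Prop :=
  [/\ (forall x t, 0 <= t -> 0 < u x t),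
      (forall x t, 0 < t -> derivable (u x) t 1 /\
                            derive1 (u x) t = Lap adj w mu (fun y => u y t) x) &
      (forall x, (fun h => (u x h - u x 0) / h) h @[h --> 0^'+]
                   --> Lap adj w mu (fun y => u y 0) x)].

(* Main.v *)
Require Import Defs.
From HB Require Import structures.
From mathcomp Require Import all_boot all_order all_algebra.
From mathcomp Require Import all_classical all_reals all_analysis.
From mathcomp Require Import ring lra.
Import Order.TTheory GRing.Theory Num.Theory.
Import numFieldNormedType.Exports.
Set Implicit Arguments. Unset Strict Implicit. Unset Printing Implicit Defensive.
Local Open Scope classical_set_scope.
Local Open Scope ring_scope.

Section Aux.
Variable R : realType.

Lemma is_derive_ext (f g : R -> R) (t d d' : R) :
  (forall s, f s = g s) -> is_derive t 1 g d -> d = d' -> is_derive t 1 f d'.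
Proof.
move=> fg H <-; have -> : f = g by apply/funext.
exact: H.
Qed.

Lemma is_derive_bigP (I : finType) (P : pred I) (h : I -> R -> R) (dh : I -> R) (t : R) :
  (forall i, is_derive t 1 (h i) (dh i)) ->
  is_derive t 1 (fun s => \sum_(i | P i) h i s) (\sum_(i | P i) dh i).
Proof.
move=> H.
rewrite -(fct_sumE (index_enum I) P h).
by elim/big_ind2 : _ => // [|f1 f2 d1 d2 ? ?]; [exact: is_derive_cst | exact: is_deriveD].
Qed.

Lemma is_derive_affine (a b t : R) : is_derive t 1 (fun l => l * a + b) a.
Proof.
have H : is_derive t 1 (a \*: (@id R)) (a *: 1).
  exact: is_deriveZ.
have H2 := is_deriveD H (is_derive_cst b t 1).
apply: is_derive_ext H2 _.
  by move=> s /=; rewrite /GRing.scale /= mulrC.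
by rewrite /GRing.scale /= mulr1 addr0.
Qed.

Lemma ratio_derive (g : R -> R) (dg : R) (a b : R -> R) (da db t : R) :
  b t != 0 -> is_derive t 1 a da -> is_derive t 1 b db ->
  is_derive (a t / b t) 1 g dg ->
  is_derive t 1 (fun s => g (a s / b s)) (dg * ((da * b t - a t * db) / (b t) ^+ 2)).
Proof.
move=> bt0 Da Db Dg.
have Dq : is_derive t 1 (a * (fun s => (b s)^-1))
   (a t *: (- (b t) ^- 2 *: db) + (b t)^-1 *: da).
  apply: is_deriveM => //; exact: is_deriveV.
have := @is_derive1_comp R g (a * (fun s => (b s)^-1)) t dg _ Dg Dq.
move=> H; apply: is_derive_ext H _ => //.
rewrite /=; congr (_ * _); rewrite /GRing.scale /=; field.
by rewrite bt0.
Qed.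

End Aux.

Section Sign.
Variable R : realType.

Lemma deriv_ge0_right (f : R -> R) (c b d : R) : c < b -> is_derive c 1 f d ->
  (forall s, c < s < b -> f c <= f s) -> 0 <= d.
Proof.
move=> cb [fdrv <-] cmin.
rewrite ['D_1 f c]cvg_at_rightE; last exact: fdrv.
apply: limr_ge.
  rewrite -(cvg_at_rightE (fun h : R => h^-1 *: ((f \o shift c) _ - f c))) //.
  apply: cvg_trans fdrv; apply: cvg_app.
  move=> A [e egt0 Ae]; exists e => // x xe xgt0; apply: Ae => //.
  exact/lt0r_neq0.
near=> h; apply: mulr_ge0.
  by rewrite invr_ge0; apply: ltW; near: h; exists 1 => /=.
rewrite subr_ge0 [_%:A]mulr1; apply: cmin; near: h.
exists (b - c); first by rewrite /= subr_gt0.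
move=> h; rewrite /= distrC subr0 /= => hb h0.
apply/andP; split; first by rewrite ltrDr.
by rewrite -ltrBrDr (le_lt_trans (ler_norm _)).
Unshelve. all: by end_near. Qed.

Lemma deriv_ge0_left (f : R -> R) (a c d : R) : a < c -> is_derive c 1 f d ->
  (forall s, a < s < c -> f s <= f c) -> 0 <= d.
Proof.
move=> ac [fdrv <-] cmax.
rewrite ['D_1 f c]cvg_at_leftE; last exact: fdrv.
apply: limr_ge.
  rewrite -(cvg_at_leftE (fun h => h^-1 *: ((f \o shift c) _ - f c))) //.
  apply: cvg_trans fdrv; apply: cvg_app.
  move=> A [e egt0 Ae]; exists e => // x xe xgt0; apply: Ae => //.
  exact/ltr0_neq0.
near=> h; apply: mulr_le0.
  by rewrite invr_le0; apply: ltW; near: h; exists 1 => /=.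
rewrite subr_le0 [_%:A]mulr1; apply: cmax; near: h.
exists (c - a); first by rewrite /= subr_gt0.
move=> h; rewrite /= distrC subr0.
move=> /ltr_normlP []; rewrite ltrBrDl ltrBlDl => -> _ h0.
by rewrite /=; lra.
Unshelve. all: by end_near. Qed.

End Sign.

Section Tangent.
Variable R : realType.

Lemma psibar_ge0 (psi : R -> R) : derivable psi 1 1 -> concave_pos psi ->
  forall r, 0 < r -> 0 <= psibar psi r.
Proof.
move=> dpsi conc r r0.
set c := derive1 psi 1.
have Dp : is_derive (0 * (r - 1) + 1) 1 psi c.
  by rewrite mul0r add0r /c derive1E; exact: derivableP.
have D1 := is_derive1_comp (f:=psi) (g:=fun l => l * (r - 1) + 1) Dp
  (is_derive_affine (r - 1) 1 0).
have D2 := is_deriveD D1 (is_derive_affine (- (psi r - psi 1)) (- psi 1) 0).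
have := @deriv_ge0_right R (fun l => psi (l * (r - 1) + 1) - psi 1 - l * (psi r - psi 1))
  0 1 (c * (r - 1) - (psi r - psi 1)) ltr01.
move=> /(_ _ _) H.
have : 0 <= c * (r - 1) - (psi r - psi 1).
  apply: H.
    apply: is_derive_ext D2 _ => //.
    by move=> s; rewrite addrfctE /=; ring.
  move=> s /andP[s0 s1].
  rewrite mul0r add0r mul0r subr0 subrr.
  have := conc r 1 s r0 ltr01.
  rewrite (ltW s0) (ltW s1) => /(_ isT).
  have -> : s * r + (1 - s) * 1 = s * (r - 1) + 1 by ring.
  move=> h; lra.
by rewrite /psibar.
Qed.

End Tangent.

Section Graph.
Variables (R : realType) (V : finType) (adj : rel V) (w : V -> V -> R) (mu : V -> R).
Local Notation Lp := (Lap adj w mu).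

Lemma Lap_lin (a b : R) (g h : V -> R) x :
  Lp (fun y => a * g y + b * h y) x = a * Lp g x + b * Lp h x.
Proof.
rewrite /Lap.
have -> : \sum_(y | adj x y) w x y * (a * g y + b * h y - (a * g x + b * h x)) =
  a * \sum_(y | adj x y) w x y * (g y - g x) + b * \sum_(y | adj x y) w x y * (h y - h x).
  rewrite !mulr_sumr -big_split /=; apply: eq_bigr => y _; ring.
ring.
Qed.

Lemma Lap_cst (g : V -> R) k x : Lp (fun y => g y + k) x = Lp g x.
Proof.
rewrite /Lap; congr (_ * _); apply: eq_bigr => y _; congr (_ * _); ring.
Qed.

Lemma Lap_ext (g h : V -> R) x : (forall y, g y = h y) -> Lp g x = Lp h x.
Proof. by move=> gh; have -> : g = h by apply/funext. Qed.

Lemma Lap_is_derive (G : V -> R -> R) (G' : V -> R) (x : V) (t : R) :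
  (forall y, is_derive t 1 (G y) (G' y)) ->
  is_derive t 1 (fun s => Lp (fun y => G y s) x) (Lp G' x).
Proof.
move=> DG.
have Hs := @is_derive_bigP R V (fun y => adj x y) (fun y s => w x y * (G y s - G x s))
  (fun y => w x y * (G' y - G' x)) t.
have Hs' : is_derive t 1 (fun s => \sum_(y | adj x y) w x y * (G y s - G x s))
   (\sum_(y | adj x y) w x y * (G' y - G' x)).
  apply: Hs => y.
have := is_deriveZ (mu x)^-1 Hs'.
move=> H; apply: is_derive_ext H _ => //.
Qed.

Lemma Lap_le_max (f Hv : V -> R) x :
  (forall x y, adj x y -> 0 < w x y) -> (forall x, 0 < mu x) ->
  (forall y, 0 < f y) -> (forall y, Hv y <= Hv x) ->
  Lp (fun y => f y * Hv y) x <= Hv x * Lp f x.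
Proof.
move=> wpos mupos fpos Hmax.
rewrite /Lap mulrCA ler_pM2l ?invr_gt0 // mulr_sumr ler_sum // => y axy.
have := wpos _ _ axy; have := fpos y; have := Hmax y => h1 h2 h3.
have : 0 <= w x y * f y * (Hv x - Hv y).
  by apply: mulr_ge0; [apply: mulr_ge0; apply: ltW|lra].
move=> h4.
have -> : Hv x * (w x y * (f y - f x)) = w x y * (f y * Hv y - f x * Hv x) + w x y * f y * (Hv x - Hv y) by ring.
lra.
Qed.

Lemma Lap_ge0 (g : V -> R) x :
  (forall x y, adj x y -> 0 < w x y) -> (forall x, 0 < mu x) ->
  (forall y, g x <= g y) -> 0 <= Lp g x.
Proof.
move=> wpos mupos gmin.
rewrite /Lap; apply: mulr_ge0; first by rewrite invr_ge0 ltW.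
apply: sumr_ge0 => y axy.
apply: mulr_ge0; first exact/ltW/wpos.
by rewrite subr_ge0.
Qed.

End Graph.

Section Alg.
Variables (R : realType) (V : finType) (adj : rel V) (w : V -> V -> R) (mu : V -> R).
Variable psi : R -> R.
Local Notation Lp := (Lap adj w mu).

Lemma psiGamma_eq (f : V -> R) z : f z != 0 ->
  psiGamma adj w mu psi f z = derive1 psi 1 * (Lp f z / f z) - psiLap adj w mu psi f z.
Proof.
move=> fz.
rewrite /psiGamma /psiLap (@Lap_ext _ _ adj w mu _
  (fun y => (derive1 psi 1 / f z * f y + (-1) * psi (f y / f z)) + (psi 1 - derive1 psi 1))).
  rewrite Lap_cst (Lap_lin _ _ _ (derive1 psi 1 / f z) (-1) f (fun y => psi (f y / f z))).
  ring.
by move=> y; rewrite /psibar; ring.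
Qed.

Definition Hfun (alpha : R) (f : V -> R) (z : V) :=
  (1 - alpha) * psiGamma adj w mu psi f z - derive1 psi 1 * (Lp f z / f z).

Definition Hder (alpha : R) (f : V -> R) (x : V) :=
  (1 - alpha) * Lp (fun y => (derive1 psi 1 - derive1 psi (f y / f x)) *
      ((Lp f y * f x - f y * Lp f x) / (f x) ^+ 2)) x
  - derive1 psi 1 * ((Lp (Lp f) x * f x - Lp f x * Lp f x) / (f x) ^+ 2).

Lemma key_identity (f : V -> R) (x : V) (alpha : R) :
  (forall y, f y != 0) ->
  2 * (1 - alpha) * psiGamma2 adj w mu psi f x =
  Lp (fun y => f y * Hfun alpha f y) x / f x - Lp f x / f x * Hfun alpha f x
  - Hder alpha f x.
Proof.
move=> fn0.
set c := derive1 psi 1.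
set D := psiLap adj w mu psi f.
set p := Lp f.
have HvE : forall z, Hfun alpha f z = - (alpha * c) * (p z / f z) - (1 - alpha) * D z.
  by move=> z; rewrite /Hfun psiGamma_eq // -/c -/p -/D; ring.
have E1 : Lp (fun y => f y * Hfun alpha f y) x =
    Lp (fun y => (- (alpha * c)) * p y + (- (1 - alpha)) * (f y * D y)) x.
  apply: Lap_ext => y; rewrite HvE; field; exact: fn0.
rewrite (Lap_lin _ _ _ _ _ p (fun y => f y * D y)) in E1.
have E3 : Lp (fun y => (Lp f y * f x - f y * Lp f x) / (f x) ^+ 2) x =
   Lp (fun y => (f x / (f x) ^+ 2) * p y + (- (p x) / (f x) ^+ 2) * f y) x.
  by apply: Lap_ext => y; rewrite -/p; field; exact: fn0.
rewrite (Lap_lin _ _ _ _ _ p f) in E3.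
have E2 : Lp (fun y => (c - derive1 psi (f y / f x)) *
      ((Lp f y * f x - f y * Lp f x) / (f x) ^+ 2)) x =
    Lp (fun y => c * ((Lp f y * f x - f y * Lp f x) / (f x) ^+ 2) + (-1) *
       (derive1 psi (f y / f x) * (f y / f x) * (Lap adj w mu f y / f y - Lap adj w mu f x / f x))) x.
  by apply: Lap_ext => y; field; apply/andP; split; exact: fn0.
rewrite (Lap_lin _ _ _ _ _ (fun y => (Lp f y * f x - f y * Lp f x) / (f x) ^+ 2)
   (fun y => derive1 psi (f y / f x) * (f y / f x) * (Lap adj w mu f y / f y - Lap adj w mu f x / f x))) in E2.
rewrite E3 in E2.
rewrite /Hder -/c E2 E1 /psiGamma2 -/D -/p HvE.
rewrite /psiOmega -/p.
field; exact: fn0.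
Qed.

End Alg.

Section Arith.
Variable R : realType.

Lemma final_arith (n K a b h g sd G2 M1 : R) :
  0 < n -> 0 < K -> 0 < a -> 0 < b -> 0 < h -> 0 <= g -> 0 < sd -> sd <= M1 ->
  2 * b * G2 * sd <= h -> n^-1 * (h + a * g) ^+ 2 - K * g <= G2 ->
  sd * h <= n / (2 * b) + M1 * K * n / (2 * a).
Proof.
move=> n0 K0 a0 b0 h0 g0 sd0 sdM HG HC.
have M0 : 0 <= M1 * K * n / (2 * a).
  by apply: divr_ge0; [apply: mulr_ge0; [apply: mulr_ge0|]|]; lra.
have nb0 : 0 <= n / (2 * b) by apply: divr_ge0; lra.
have [hb|hs] := lerP (K * n) (2 * a * h).
  have E : n^-1 * h ^+ 2 <= G2.
    apply: le_trans HC.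
    have -> : n^-1 * (h + a * g) ^+ 2 - K * g =
       n^-1 * h ^+ 2 + n^-1 * (g * (2 * a * h - K * n) + a ^+ 2 * g ^+ 2) by field; lra.
    rewrite lerDl; apply: mulr_ge0; first by rewrite invr_ge0 ltW.
    apply: addr_ge0; first by apply: mulr_ge0 => //; lra.
    by apply: mulr_ge0; rewrite sqr_ge0.
  have E2 : 2 * b * (n^-1 * h ^+ 2) * sd <= h.
    apply: le_trans HG; rewrite ler_pM2r // ler_pM2l //; lra.
  have E3 : sd * h <= n / (2 * b).
    have hn : 2 * b * (n^-1 * h ^+ 2) * sd = (2 * b / n * h) * (sd * h) by field; lra.
    rewrite hn in E2.
    rewrite ler_pdivlMr; last lra.
    have : (2 * b / n * h) * (sd * h) <= h * 1 by rewrite mulr1.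
    have -> : (2 * b / n * h) * (sd * h) = h * (2 * b / n * (sd * h)) by ring.
    rewrite ler_pM2l // => H1.
    have -> : sd * h * (2 * b) = n * (2 * b / n * (sd * h)) by field; lra.
    by rewrite -[n in _ <= n]mulr1 ler_pM2l.
  lra.
have E : sd * h <= M1 * K * n / (2 * a).
  apply: le_trans (_ : M1 * h <= _).
    by rewrite ler_pM2r.
  have -> : M1 * K * n / (2 * a) = M1 * (K * n / (2 * a)) by ring.
  apply: ler_wpM2l; first lra.
  rewrite ler_pdivlMr; lra.
lra.
Qed.

Lemma fin_argmax (V : finType) (g : V -> R) (x0 : V) : exists z, forall y, g y <= g z.
Proof.
case: (@Order.TotalTheory.arg_maxP _ R V x0 xpredT g isT) => z _ H.
by exists z => y; exact: H.
Qed.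

End Arith.

Lemma aux_ineq (R : realType) (A Hd h sd : R) :
  A <= 0 -> 0 < sd -> 0 <= h + sd * Hd -> (A - Hd) * sd <= h.
Proof.
move=> A0 sd0 H.
have : A * sd <= 0 by nra.
move=> H1; have -> : (A - Hd) * sd = A * sd - sd * Hd by ring.
lra.
Qed.

Theorem mainTheorem4 (R : realType) (V : finType)
  (adj : rel V) (w : V -> V -> R) (mu : V -> R)
  (psi : R -> R) (n K alpha : R) (u : V -> R -> R) :
  weighted_graph adj w mu ->
  C1_pos psi -> concave_pos psi ->
  0 < n -> 0 < K ->
  CDpsi adj w mu psi n (- K) ->
  heat_solution adj w mu u ->
  0 < alpha < 1 ->
  forall (x : V) (t : R), 0 < t ->
    (1 - alpha) * psiGamma adj w mu psi (fun y => u y t) x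
      - derive1 psi 1 * (derive1 (u x) t / u x t)
    <= n / (2 * (1 - alpha) * t) + K * n / alpha.
Proof.
move=> [_ _ wpos mupos] [dpsi _] conc n0 K0 CD [upos uder _] /andP[a0 a1] x T T0.
have b0 : 0 < 1 - alpha by lra.
have upos' : forall (y : V) (s : R), 0 < s -> 0 < u y s by move=> y s s0; apply: upos; exact: ltW.
have Du : forall (y : V) (s : R), 0 < s -> is_derive s 1 (u y) (Lap adj w mu (fun z => u z s) y).
  move=> y s s0; have [d e] := uder y s s0; rewrite -e derive1E; exact: derivableP.
have Dpb : forall r : R, 0 < r -> is_derive r 1 (psibar psi) (derive1 psi 1 - derive1 psi r).
  move=> r r0.
  have Dp : is_derive r 1 psi (derive1 psi r).
    by rewrite derive1E; apply: derivableP; exact: dpsi.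
  apply: is_derive_ext (is_deriveB (is_derive_affine (derive1 psi 1) (psi 1 - derive1 psi 1) r) Dp) _ => //.
  move=> s; by rewrite /psibar addrfctE opprfctE /=; ring.
have DH : forall (z : V) (s : R), 0 < s ->
    is_derive s 1 (fun s => Hfun adj w mu psi alpha (fun y => u y s) z)
      (Hder adj w mu psi alpha (fun y => u y s) z).
  move=> z s s0.
  have uz : u z s != 0 by rewrite gt_eqF // upos'.
  have G1 : is_derive s 1 (fun s => Lap adj w mu (fun y => psibar psi (u y s / u z s)) z)
     (Lap adj w mu (fun y => (derive1 psi 1 - derive1 psi (u y s / u z s)) *
        ((Lap adj w mu (fun y => u y s) y * u z s - u y s * Lap adj w mu (fun y => u y s) z)
          / (u z s) ^+ 2)) z).
    apply: (@Lap_is_derive _ _ adj w mu (fun y s => psibar psi (u y s / u z s))) => y.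
    apply: ratio_derive => //; [exact: Du | exact: Du |].
    by apply: Dpb; apply: divr_gt0; exact: upos'.
  have L1 : is_derive s 1 (fun s => id (Lap adj w mu (fun y => u y s) z / u z s))
     (1 * ((Lap adj w mu (Lap adj w mu (fun y => u y s)) z * u z s -
            Lap adj w mu (fun y => u y s) z * Lap adj w mu (fun y => u y s) z) / (u z s) ^+ 2)).
    apply: (ratio_derive (g := id) (a := fun s => Lap adj w mu (fun y => u y s) z) (b := u z)) => //.
    - by apply: (@Lap_is_derive _ _ adj w mu (fun y s => u y s)) => y; exact: Du.
    - exact: Du.
  apply: is_derive_ext (is_deriveB (is_deriveZ (1 - alpha) G1) (is_deriveZ (derive1 psi 1) L1)) _.
    by move=> s'; rewrite /Hfun addrfctE opprfctE /=.
  by rewrite /Hder /GRing.scale /= mul1r.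

pose Q := alpha + (1 - alpha) * K * T.
have bKT : 0 < (1 - alpha) * K * T by apply: mulr_gt0 => //; apply: mulr_gt0.
have Q0 : 0 < Q by rewrite /Q; lra.
pose eps := T - T * alpha / Q.
have Teps : T - eps = T * alpha / Q by rewrite /eps; ring.
have TQ0 : 0 < T * alpha / Q by apply: divr_gt0 => //; apply: mulr_gt0.
have eps0 : 0 < eps.
  rewrite /eps subr_gt0 ltr_pdivrMr // /Q mulrDr ltrDl.
  exact: mulr_gt0.
have epsT : eps < T by lra.
pose Hf z s := Hfun adj w mu psi alpha (fun y => u y s) z.
pose F z s := (s - eps) * Hf z s.
have DF : forall (z : V) (s : R), 0 < s ->
    is_derive s 1 (F z) (Hf z s + (s - eps) * Hder adj w mu psi alpha (fun y => u y s) z).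
  move=> z s s0.
  apply: is_derive_ext (is_deriveM (is_derive_affine 1 (- eps) s) (DH z s s0)) _.
    by move=> s'; rewrite /F /Hf mulrfctE /= mulr1.
  by rewrite /GRing.scale /= /Hf !mulr1 addrC.
have Fc : forall z, {within `[eps, T], continuous (F z)}.
  move=> z; apply: derivable_within_continuous => s; rewrite in_itv /= => /andP[s1 s2].
  have s0 : 0 < s := lt_le_trans eps0 s1.
  by case: (DF z s s0).
have tmax : forall z, exists t, t \in `[eps, T] /\ forall s, s \in `[eps, T] -> F z s <= F z t.
  by move=> z; have [t tin tm] := EVT_max (ltW epsT) (Fc z); exists t.
have [tt Htt] := choice tmax.
have [xs Hxs] := fin_argmax (fun z => F z (tt z)) x.
set ts := tt xs.
have Fmax : forall z s, s \in `[eps, T] -> F z s <= F xs ts.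
  move=> z s sin; apply: le_trans (Hxs z); exact: (Htt z).2.
pose M := n / (2 * (1 - alpha)) + (T - eps) * K * n / (2 * alpha).
have Fb : F xs ts <= M.
  have M0 : 0 <= M.
    rewrite /M; apply: addr_ge0; apply: divr_ge0; try lra.
    by apply: mulr_ge0; [apply: mulr_ge0|]; lra.
  have [Fle|Fgt] := lerP (F xs ts) 0; first lra.
  have [tin tmx] := Htt xs.
  move: (tin); rewrite in_itv /= => /andP[te tT].
  have tse : eps < ts.
    rewrite lt_neqAle te andbT; apply/eqP => e; move: Fgt.
    by rewrite /F -/ts -e subrr mul0r ltxx.
  have ts0 : 0 < ts := lt_trans eps0 tse.
  have sd0 : 0 < ts - eps by lra.
  have h0 : 0 < Hf xs ts.
    by move: Fgt; rewrite /F pmulr_rgt0.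
  pose f := fun y => u y ts.
  have fpos : forall y, 0 < f y by move=> y; exact: upos'.
  have fn0 : forall y, f y != 0 by move=> y; rewrite gt_eqF.
  have Tder : 0 <= Hf xs ts + (ts - eps) * Hder adj w mu psi alpha f xs.
    apply: (deriv_ge0_left tse (DF xs ts ts0)) => s /andP[s1 s2].
    apply: Fmax; rewrite in_itv /=; apply/andP; split; first exact: ltW.
    exact: (le_trans (ltW s2) tT).
  have Smax : forall y, Hfun adj w mu psi alpha f y <= Hfun adj w mu psi alpha f xs.
    move=> y; have := Fmax y ts tin; rewrite /F ler_pM2l //.
  have LapM := @Lap_le_max _ _ adj w mu f (Hfun adj w mu psi alpha f) xs wpos mupos fpos Smax.
  have KI := key_identity adj w mu psi xs alpha fn0.
  have CDx := CD f fpos xs.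
  have Gpos : 0 <= psiGamma adj w mu psi f xs.
    rewrite /psiGamma /psiLap; apply: Lap_ge0 => // y.
    rewrite divff ?fn0 //.
    have -> : psibar psi 1 = 0 by rewrite /psibar !subrr mulr0 subr0.
    apply: psibar_ge0 => //; first exact: dpsi.
    by apply: divr_gt0.
  have GE := psiGamma_eq adj w mu psi (fn0 xs).
  have A0 : Lap adj w mu (fun y => f y * Hfun adj w mu psi alpha f y) xs / f xs
      - Lap adj w mu f xs / f xs * Hfun adj w mu psi alpha f xs <= 0.
    rewrite subr_le0 ler_pdivrMr //.
    have -> : Lap adj w mu f xs / f xs * Hfun adj w mu psi alpha f xs * f xs =
      Hfun adj w mu psi alpha f xs * Lap adj w mu f xs by field; exact: fn0.
    exact: LapM.
  have HG : 2 * (1 - alpha) * psiGamma2 adj w mu psi f xs * (ts - eps) <= Hf xs ts.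
    rewrite KI; exact: aux_ineq A0 sd0 Tder.
  have Dm : psiLap adj w mu psi f xs =
      - (Hfun adj w mu psi alpha f xs + alpha * psiGamma adj w mu psi f xs).
    rewrite /Hfun GE; ring.
  have HC : n^-1 * (Hf xs ts + alpha * psiGamma adj w mu psi f xs) ^+ 2
      - K * psiGamma adj w mu psi f xs <= psiGamma2 adj w mu psi f xs.
    move: CDx; rewrite Dm sqrrN mulNr; exact.
  have := final_arith n0 K0 a0 b0 h0 Gpos sd0 _ HG HC.
  move=> /(_ (T - eps)) H; rewrite /F /M; apply: H; by rewrite lerD2r.
have FT : F x T <= M.
  apply: le_trans (Fmax x T _) Fb.
  by rewrite in_itv /= lexx andbT ltW.
have [_ dT] := uder x T T0.
rewrite dT.
change (Hf x T <= n / (2 * (1 - alpha) * T) + K * n / alpha).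
have ME : M = (T - eps) * (n / (2 * (1 - alpha) * T) + K * n / alpha).
  rewrite /M Teps /Q; field.
  by apply/and4P; split; apply/negP; rewrite ?(gt_eqF) //; lra.
move: FT; rewrite /F ME ler_pM2l //; lra.
Qed.
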